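(* Let $q$ be a prime power, $n\ge 2$, $K=\mathbb{F}_{q^n}$, $d=\frac{q^n-1}{q-1}$, and for $1\le i\le n-1$ let $E_{i,\mathrm{Kum}}=K(x,y)$ with $y^d=s_{n,i}(x)$. Then $E_{i,\mathrm{Kum}}\cong E_{n-i,\mathrm{Kum}}$ as function fields over $K$.
   Context: For a prime power $q$ and integers $n\ge 1$, $0\le i\le n$, the $i$-th $(n,q)$-elementary symmetric polynomial is $s_{n,i}(t)=\sum_{0\le j_1<\dots<j_i\le n-1} t^{q^{j_1}+\dots+q^{j_i}}\in\mathbb{F}_p[t]$. *)

(* Defs.v *)
From HB Require Import structures.
From mathcomp Require Import all_boot all_order all_algebra all_field.
Set Implicit Arguments. Unset Strict Implicit. Unset Printing Implicit Defensive.
Import GRing.Theory.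
Local Open Scope ring_scope.

Definition sym_q (K : nzRingType) (q n i : nat) : {poly K} :=
  \sum_(S : {set 'I_n} | #|S| == i) 'X^(\sum_(j in S) q ^ j)%N.

Definition kum_deg (q n : nat) : nat := ((q ^ n - 1) %/ (q - 1))%N.

Definition kummer_poly (K : fieldType) (q n i : nat) : {poly {fraction {poly K}}} :=
  'X^(kum_deg q n) - (FracField.tofrac (sym_q K q n i))%:P.

(* The function field E_{i,Kum} = K(x,y), y^d = s_{n,i}(x), realised as
   K(x)[Y]/(Y^d - s_{n,i}(x)); a proof of irreducibility is needed to get
   the field structure. *)
Definition kumF (K : fieldType) (q n i : nat)
  (mi : monic_irreducible_poly (kummer_poly K q n i)) : predArgType :=
  {poly %/ kummer_poly K q n i with mi}.

Definition kum_const (K : fieldType) (q n i : nat)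
  (mi : monic_irreducible_poly (kummer_poly K q n i)) (c : K) : kumF mi :=
  in_qpoly (kummer_poly K q n i) (FracField.tofrac (c%:P))%:P.

(* Main.v *)
Require Import Defs.
From HB Require Import structures.
From mathcomp Require Import all_boot all_order all_algebra all_field.
From mathcomp Require Import ring zify.
Set Implicit Arguments. Unset Strict Implicit. Unset Printing Implicit Defensive.
Import GRing.Theory.
Local Open Scope ring_scope.
Local Open Scope quotient_scope.
Lemma fracB (F: fieldType) (a b c d: F): b!=0 -> d!=0 -> a/b - c/d = (a*d - c*b)/(b*d).
Proof. move=> b0 d0. field. by rewrite b0 d0. Qed.
Lemma fracM (F: fieldType) (a b c d: F): b!=0 -> d!=0 -> a/b * (c/d) = (a*c)/(b*d).
Proof. move=> b0 d0. field. by rewrite b0 d0. Qed.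

Section Lift.
Variable R : idomainType.
Local Notation tf := (@FracField.tofrac R).

Lemma frac_num_r (r : {ratio R}) : tf (\n_r) = (\pi_{fraction R} r) * tf (\d_r).
Proof.
unlock FracField.tofrac.
rewrite -[RHS]/(FracField.mul _ _) -FracField.pi_mul.
apply/eqmodP; rewrite /= FracField.equivfE /FracField.mulf /=.
rewrite !numden_Ratio ?oner_neq0 ?mulf_neq0 ?oner_neq0 ?denom_ratioP //.
by rewrite mulr1 mul1r.
Qed.

Lemma tf_nz (a : R) : a != 0 -> tf a != 0.
Proof. by rewrite tofrac_eq0. Qed.

Lemma frac_repr (x : {fraction R}) : x = tf \n_(repr x) / tf \d_(repr x).
Proof. by rewrite frac_num_r reprK mulfK //; apply: tf_nz; apply: denom_ratioP. Qed.

Variable L : fieldType.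
Variable phi : {rmorphism R -> L}.
Hypothesis phi_nz : forall a, a != 0 -> phi a != 0.

Definition flift of (forall a, a != 0 -> phi a != 0) :=
  fun (x : {fraction R}) => phi \n_(repr x) / phi \d_(repr x).
Local Notation fl := (flift phi_nz).

Lemma flift_frac a b : b != 0 -> fl (tf a / tf b) = phi a / phi b.
Proof.
move=> b0; rewrite /flift.
have e := frac_num_r (repr (tf a / tf b)); rewrite reprK in e.
have d0 := denom_ratioP (repr (tf a / tf b)).
move: e d0.
move: (\n_(repr (tf a / tf b))) (\d_(repr (tf a / tf b))) => n d e d0.
have : tf (n * b) = tf (a * d).
  by rewrite !tofracM e mulrAC mulfVK ?tf_nz.
move/eqP; rewrite tofrac_eq => /eqP nbad.
apply/eqP; rewrite eqr_div ?phi_nz // -!rmorphM nbad mulrC.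
done.
Qed.

Lemma flift_tf a : fl (tf a) = phi a.
Proof.
have := flift_frac a (oner_neq0 R); rewrite tofrac1 rmorph1 !divr1 => ->.
by [].
Qed.

Lemma flift_is_zmod : zmod_morphism fl.
Proof.
move=> x y; rewrite (frac_repr x) (frac_repr y).
set a := \n_(repr x); set b := \d_(repr x); set c := \n_(repr y); set d := \d_(repr y).
have b0 : b != 0 by apply: denom_ratioP. have d0 : d != 0 by apply: denom_ratioP.
have -> : tf a / tf b - tf c / tf d = tf (a * d - c * b) / tf (b * d).
  by rewrite tofracB !tofracM fracB ?tf_nz.
by rewrite !flift_frac ?mulf_neq0 // rmorphB !rmorphM fracB ?phi_nz.
Qed.

Lemma flift_is_monoid : monoid_morphism fl.
Proof.
split; first by rewrite -tofrac1 flift_tf rmorph1.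
move=> x y; rewrite (frac_repr x) (frac_repr y).
set a := \n_(repr x); set b := \d_(repr x); set c := \n_(repr y); set d := \d_(repr y).
have b0 : b != 0 by apply: denom_ratioP. have d0 : d != 0 by apply: denom_ratioP.
have -> : tf a / tf b * (tf c / tf d) = tf (a * c) / tf (b * d).
  by rewrite !tofracM fracM ?tf_nz.
by rewrite !flift_frac ?mulf_neq0 // !rmorphM fracM ?phi_nz.
Qed.

HB.instance Definition _ := GRing.isZmodMorphism.Build _ _ fl flift_is_zmod.
HB.instance Definition _ := GRing.isMonoidMorphism.Build _ _ fl flift_is_monoid.

End Lift.

Section Sigma.
Variable K : fieldType.
Local Notation F := {fraction {poly K}}.
Local Notation tf := (@FracField.tofrac {poly K}).
Definition tX : F := tf 'X.
Definition fK : {rmorphism K -> F} := tf \o polyC.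
Lemma tX_nz : tX != 0.
Proof. by rewrite /tX tofrac_eq0 polyX_eq0. Qed.
Lemma cfuV : commr_rmorph fK tX^-1.
Proof. by move=> a; apply: mulrC. Qed.
Definition phiV : {rmorphism {poly K} -> F} := horner_morph cfuV.

Lemma phiV_nz (p : {poly K}) : p != 0 -> phiV p != 0.
Proof.
move=> p0.
set m := (size p).-1.
have sp : size p = m.+1 by rewrite /m prednK // size_poly_gt0.
pose q := \sum_(i < size p) (p`_i)%:P * 'X^(m - i).
have e : tX ^+ m * phiV p = tf q.
  have -> : phiV p = (map_poly fK p).[tX^-1] by [].
  rewrite horner_coef size_map_poly mulr_sumr rmorph_sum.
  apply: eq_bigr => i _.
  rewrite coef_map rmorphM rmorphXn /= -/tX /fK /= mulrCA.
  congr (_ * _).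
  have him : (i <= m)%N by rewrite -ltnS -sp ltn_ord.
  by rewrite -{1}(subnK him) exprD exprVn mulfK ?expf_neq0 ?tX_nz.
have q0 : q`_0 = lead_coef p.
  rewrite /q coef_sum sp big_ord_recr /= big1 ?add0r.
    by rewrite coefCM subnn expr0 coefC mulr1 lead_coefE sp.
  move=> i _; rewrite coefCM coefXn.
  have : (0 != m - i)%N by rewrite eq_sym subn_eq0 -ltnNge ltn_ord.
  by move=> /negbTE ->; rewrite mulr0.
apply/negP => /eqP h0.
have : tf q == 0 by rewrite -e h0 mulr0.
rewrite tofrac_eq0 => /eqP qz.
by move: q0; rewrite qz coef0 => /esym/eqP; rewrite lead_coef_eq0 (negbTE p0).
Qed.

Definition sig : {rmorphism F -> F} := flift phiV_nz.

Lemma sig_tf p : sig (tf p) = phiV p.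
Proof. exact: flift_tf. Qed.

Lemma sig_fK c : sig (fK c) = fK c.
Proof. rewrite /fK /= sig_tf; exact: (horner_morphC cfuV c). Qed.

Lemma sig_tX : sig tX = tX^-1.
Proof. rewrite /tX sig_tf; exact: (horner_morphX cfuV). Qed.

Lemma tf_horner p : tf p = (map_poly fK p).[tX].
Proof. exact: (poly_initial tf p). Qed.

Lemma sig_phiV p : sig (phiV p) = tf p.
Proof.
rewrite tf_horner.
have -> : phiV p = (map_poly fK p).[tX^-1] by [].
rewrite -horner_map /= fmorphV sig_tX invrK -map_poly_comp.
congr (_.[_]); apply: eq_map_poly => c /=.
exact: sig_fK.
Qed.

Lemma sigK x : sig (sig x) = x.
Proof.
rewrite (frac_repr x); move: (\n_ _) (\d_ _) => n d.
have h1 : sig (tf n / tf d) = phiV n / phiV d by rewrite (fmorph_div sig (tf n)) !sig_tf.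
by rewrite h1 (fmorph_div sig (phiV n)) !sig_phiV.
Qed.

Lemma kum_degE q n : (1 < q)%N -> kum_deg q n = (\sum_(j < n) q ^ j)%N.
Proof.
move=> q1; rewrite /kum_deg subn1 predn_exp subn1 mulKn //.
by rewrite -subn1 subn_gt0.
Qed.

Lemma sig_sym q n i : (1 < q)%N -> (i <= n)%N ->
  sig (tf (sym_q K q n i)) = tX ^- (kum_deg q n) * tf (sym_q K q n (n - i)).
Proof.
move=> q1 hi.
rewrite sig_tf /sym_q !rmorph_sum mulr_sumr.
rewrite (reindex_inj (@setC_inj _)) /=.
apply: eq_big => [S|S /eqP hS].
  rewrite cardsCs setCK card_ord.
  have hS : (#|S| <= n)%N by apply: leq_trans (max_card _) _; rewrite card_ord.
  move: hS; move: (#|S|) => c hc.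
  by apply/eqP/eqP; lia.
have -> : horner_morph cfuV 'X^(\sum_(j in ~: S) q ^ j) = tX^-1 ^+ (\sum_(j in ~: S) q ^ j).
  by rewrite /horner_morph map_polyXn hornerXn.
rewrite tofracXn -/tX kum_degE // [X in tX ^- X](bigID (mem (~: S))) /=.
have -> : (\sum_(j < n | j \notin ~: S) q ^ j)%N = (\sum_(j in S) q ^ j)%N.
  by apply: eq_bigl => j; rewrite in_setC negbK.
by rewrite exprD invfM exprVn mulfVK // expf_neq0 // tX_nz.
Qed.

End Sigma.

Section Kum.
Variable K : fieldType.
Local Notation F := {fraction {poly K}}.
Local Notation tf := (@FracField.tofrac {poly K}).
Local Notation sig := (@sig K).
Local Notation tX := (@tX K).

Definition cst (P : {poly F}) (mi : monic_irreducible_poly P) (x : F) : qfpoly mi :=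
  in_qpoly P x%:P.

Section Cst.
Variables (P : {poly F}) (mi : monic_irreducible_poly P).
Lemma cst_is_zmod : zmod_morphism (cst mi).
Proof. by move=> x y; rewrite /cst polyCB rmorphB. Qed.
Lemma cst_is_monoid : monoid_morphism (cst mi).
Proof. by split; [rewrite /cst rmorph1 | move=> x y; rewrite /cst polyCM rmorphM]. Qed.
HB.instance Definition _ := GRing.isZmodMorphism.Build _ _ (cst mi) cst_is_zmod.
HB.instance Definition _ := GRing.isMonoidMorphism.Build _ _ (cst mi) cst_is_monoid.
Definition qY : qfpoly mi := in_qpoly P 'X.

Lemma qfpoly_horner (x : qfpoly mi) :
  x = (map_poly (cst mi) (x : {poly F})).[qY].
Proof.
have -> : (map_poly (cst mi) (x : {poly F})).[qY] = in_qpoly P (x : {poly F}).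
  by rewrite (poly_initial (in_qpoly P) (x : {poly F})).
apply: val_inj => /=; rewrite Pdiv.Ring.rmodp_small //.
exact: size_mk_monic.
Qed.
End Cst.

End Kum.

Section Kum2.
Variable K : fieldType.
Local Notation F := {fraction {poly K}}.
Local Notation tf := (@FracField.tofrac {poly K}).
Local Notation sig := (@sig K).
Local Notation tX := (@tX K).

Lemma qK (P : {poly F}) (mi : monic_irreducible_poly P) (x : qfpoly mi) :
  in_qpoly P (x : {poly F}) = x.
Proof. by apply: val_inj => /=; rewrite Pdiv.Ring.rmodp_small //; exact: size_mk_monic. Qed.

Lemma valM (P : {poly F}) (mi : monic_irreducible_poly P) (x y : qfpoly mi) :
  ((x * y : qfpoly mi) : {poly F}) = Pdiv.Ring.rmodp ((x : {poly F}) * (y : {poly F})) (mk_monic P).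
Proof. exact: (poly_of_qpolyM x y). Qed.

Section Map.
Variables (d : nat) (a b : F).
Variable mia : monic_irreducible_poly ('X^d - a%:P).
Variable mib : monic_irreducible_poly ('X^d - b%:P).
Local Notation Ea := (qfpoly mia).
Local Notation Eb := (qfpoly mib).

Definition sigb : {rmorphism F -> Eb} := cst mib \o sig.
Definition Yb : Eb := qY mib / cst mib tX.
Lemma cfub : commr_rmorph sigb Yb.
Proof. by move=> x; apply: mulrC. Qed.
Definition gab : {rmorphism {poly F} -> Eb} := horner_morph cfub.

Lemma gabE p : gab p = (map_poly sigb p).[Yb].
Proof. by []. Qed.

Lemma cstX_nz (P : {poly F}) (mi : monic_irreducible_poly P) : cst mi tX != 0.
Proof. by rewrite fmorph_eq0 tX_nz. Qed.

Lemma qY_eq (P : {poly F}) (mi : monic_irreducible_poly P) c :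
  P = 'X^d - c%:P -> qY mi ^+ d = cst mi c.
Proof.
move=> eP; apply/eqP; rewrite -subr_eq0; apply/eqP.
rewrite /qY /cst -rmorphXn -rmorphB -eP.
apply: val_inj => /=; rewrite (mk_monicE mi) Pdiv.RingMonic.rmodpp //.
by case: mi.
Qed.

Hypothesis hab : sig a = tX ^- d * b.

Lemma gab_P : gab ('X^d - a%:P) = 0.
Proof.
rewrite rmorphB rmorphXn /=.
rewrite (horner_morphX cfub) (horner_morphC cfub).
have -> : sigb a = cst mib (sig a) by [].
rewrite hab rmorphM fmorphV rmorphXn /Yb expr_div_n (qY_eq (c := b) mib) //.
by rewrite mulrC subrr.
Qed.

Definition fab of sig a = tX ^- d * b := fun (x : Ea) => (gab (x : {poly F}) : Eb).

Lemma gab_mod p : gab (Pdiv.Ring.rmodp p (mk_monic ('X^d - a%:P))) = gab p.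
Proof.
have mo := monic_mk_monic ('X^d - a%:P).
have e : gab p = gab (Pdiv.Ring.rdivp p (mk_monic ('X^d - a%:P)) * mk_monic ('X^d - a%:P))
   + gab (Pdiv.Ring.rmodp p (mk_monic ('X^d - a%:P))).
  by rewrite -rmorphD -Pdiv.RingMonic.rdivp_eq.
by rewrite e rmorphM (mk_monicE mia) gab_P mulr0 add0r.
Qed.

Lemma fab_in p : fab hab (in_qpoly _ p) = gab p.
Proof.
rewrite /fab; change (gab (Pdiv.Ring.rmodp p (mk_monic ('X^d - a%:P))) = gab p).
exact: gab_mod.
Qed.

Lemma fab_is_zmod : zmod_morphism (fab hab).
Proof.
move=> x y; rewrite /fab.
have -> : ((x - y : Ea) : {poly F}) = (x : {poly F}) - (y : {poly F}) by [].
exact: rmorphB.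
Qed.

Lemma fab_is_monoid : monoid_morphism (fab hab).
Proof.
split.
  rewrite /fab.
  have -> : ((1 : Ea) : {poly F}) = 1%:P by exact: qpolyCE.
  rewrite -[RHS](rmorph1 sigb); exact: (horner_morphC cfub).
move=> x y.
rewrite /fab valM gab_mod rmorphM.
done.
Qed.
HB.instance Definition _ := GRing.isZmodMorphism.Build _ _ (fab hab) fab_is_zmod.
HB.instance Definition _ := GRing.isMonoidMorphism.Build _ _ (fab hab) fab_is_monoid.

Lemma fab_cst x : fab hab (cst mia x) = cst mib (sig x).
Proof. by rewrite /cst fab_in; exact: (horner_morphC cfub). Qed.

Lemma fab_qY : fab hab (qY mia) = qY mib / cst mib tX.
Proof. by rewrite /qY fab_in; exact: (horner_morphX cfub). Qed.
End Map.

Lemma divK_gen (E : fieldType) (f : {rmorphism F -> E}) (y : E) (t : F) :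
  t != 0 -> y / f t / f t^-1 = y.
Proof. by move=> t0; rewrite fmorphV invrK mulfVK // fmorph_eq0. Qed.

Lemma morph_qf (P : {poly F}) (mi : monic_irreducible_poly P) (R : nzRingType)
  (f : {rmorphism qfpoly mi -> R}) (x : qfpoly mi) :
  f x = (map_poly (f \o cst mi) (x : {poly F})).[f (qY mi)].
Proof. by rewrite {1}[x]qfpoly_horner -horner_map -map_poly_comp. Qed.

Lemma fabK d a b (mia : monic_irreducible_poly ('X^d - a%:P))
  (mib : monic_irreducible_poly ('X^d - b%:P))
  (hab : sig a = tX ^- d * b) (hba : sig b = tX ^- d * a) :
  cancel (fab (mia:=mia) mib hab) (fab (mia:=mib) mia hba).
Proof.
move=> x.
have := morph_qf (fab (mia:=mib) mia hba \o fab (mia:=mia) mib hab) x.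
move=> /= ->.
have e1 : (fab (mia:=mib) mia hba (fab (mia:=mia) mib hab (qY mia))) = qY mia.
  rewrite fab_qY fmorph_div.
  change (fab (mia:=mib) mia hba (qY mib) / fab (mia:=mib) mia hba (cst mib tX) = qY mia).
  rewrite fab_qY (@fab_cst _ _ _ mib mia hba tX) sig_tX.
  exact: (divK_gen (cst mia) (qY mia) (@tX_nz K)).
rewrite e1 {2}[x]qfpoly_horner; congr (_.[_]).
apply: eq_map_poly => c /=.
by rewrite fab_cst fab_cst sigK.
Qed.
End Kum2.

Lemma sig_swap (K : fieldType) d (a b : {fraction {poly K}}) :
  sig K a = tX K ^- d * b -> sig K b = tX K ^- d * a.
Proof.
move=> h.
have -> : b = tX K ^+ d * sig K a.
  by rewrite h mulrA mulfV ?expf_neq0 ?tX_nz // mul1r.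
by rewrite rmorphM rmorphXn sig_tX sigK exprVn.
Qed.

Local Close Scope quotient_scope.
Unset Implicit Arguments.

Theorem lemma4p26 (p k n : nat) (K : finFieldType)
  (hp : prime p) (hk : (0 < k)%N) (hn : (2 <= n)%N)
  (hK : #|K| = ((p ^ k) ^ n)%N)
  (i : nat) (hi1 : (1 <= i)%N) (hi2 : (i <= n - 1)%N)
  (mi1 : monic_irreducible_poly (kummer_poly K (p ^ k) n i))
  (mi2 : monic_irreducible_poly (kummer_poly K (p ^ k) n (n - i))) :
  exists f : {rmorphism kumF mi1 -> kumF mi2},
    bijective f /\ forall c : K, f (kum_const mi1 c) = kum_const mi2 c.
Proof.
have q1 : (1 < p ^ k)%N.
  rewrite -(expn0 p) ltn_exp2l //; exact: prime_gt1.
have hin : (i <= n)%N by apply: leq_trans hi2 (leq_subr _ _).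
have hab := @sig_sym K (p ^ k) n i q1 hin.
have hba := sig_swap hab.
exists (@fab K _ _ _ mi1 mi2 hab).
split.
  exact: (Bijective (@fabK K _ _ _ mi1 mi2 hab hba) (@fabK K _ _ _ mi2 mi1 hba hab)).
move=> c.
change (@fab K _ _ _ mi1 mi2 hab (cst mi1 (fK K c)) = cst mi2 (fK K c)).
by rewrite fab_cst sig_fK.
Qed.
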